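(* There exists a constant $\mu$ with $0<\mu<1/2$ such that for every $r>0$ the spiral $\gamma:\mathbb{R}\to\mathbb{R}^3$, $\gamma(t)=(r\cos t,\,r\sin t,\,\mu r t)$, is self-expanded (and hence satisfies the $\lambda$-cone property for all $\lambda\in[0,1)$).
   Context: $\mathbb{R}^3$ carries the Euclidean inner product $\langle\cdot,\cdot\rangle$ and norm $\|\cdot\|$. A curve $\gamma$ defined on an interval is self-expanded if for all $t_1\le t_2\le t_3$: $\|\gamma(t_1)-\gamma(t_2)\|\le\|\gamma(t_1)-\gamma(t_3)\|$. A differentiable curve with nonvanishing derivative satisfies the $\lambda$-cone property if for all $t<\tau$: $\langle\gamma'(\tau),\gamma(t)-\gamma(\tau)\rangle\le\lambda\|\gamma'(\tau)\|\|\gamma(t)-\gamma(\tau)\|$. *)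

(* Defs.v *)
From Stdlib Require Import Reals Lra.
Open Scope R_scope.

Definition vec3 : Type := (R * R * R)%type.

Definition v3x (v : vec3) : R := fst (fst v).
Definition v3y (v : vec3) : R := snd (fst v).
Definition v3z (v : vec3) : R := snd v.

Definition v3sub (u v : vec3) : vec3 :=
  (v3x u - v3x v, v3y u - v3y v, v3z u - v3z v).

Definition inner3 (u v : vec3) : R :=
  v3x u * v3x v + v3y u * v3y v + v3z u * v3z v.

Definition norm3 (u : vec3) : R := sqrt (inner3 u u).

Definition self_expanded (g : R -> vec3) : Prop :=
  forall t1 t2 t3 : R, t1 <= t2 -> t2 <= t3 ->
    norm3 (v3sub (g t1) (g t2)) <= norm3 (v3sub (g t1) (g t3)).

Definition is_deriv3 (g g' : R -> vec3) : Prop :=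
  forall t : R,
    derivable_pt_lim (fun s => v3x (g s)) t (v3x (g' t)) /\
    derivable_pt_lim (fun s => v3y (g s)) t (v3y (g' t)) /\
    derivable_pt_lim (fun s => v3z (g s)) t (v3z (g' t)).

Definition cone_property (lam : R) (g : R -> vec3) : Prop :=
  exists g' : R -> vec3,
    is_deriv3 g g' /\
    (forall t : R, g' t <> (0, 0, 0)) /\
    (forall t tau : R, t < tau ->
       inner3 (g' tau) (v3sub (g t) (g tau))
         <= lam * norm3 (g' tau) * norm3 (v3sub (g t) (g tau))).

Definition spiral (r mu : R) (t : R) : vec3 :=
  (r * cos t, r * sin t, mu * r * t).

(* Main.v *)
Require Import Defs.
From Stdlib Require Import Reals Lra Psatz.
From Coquelicot Require Import Coquelicot.
Open Scope R_scope.

Lemma PI_gt_31 : 31/10 < PI.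
Proof.
assert (31/20 < PI/2); [|lra].
apply PI2_lower_bound;[split; lra | ].
destruct (pre_cos_bound (31/20) 1) as [t _]; [lra | lra | ].
apply Rlt_le_trans with (2 := t); clear t.
unfold cos_approx; simpl; unfold cos_term.
rewrite !INR_IZR_INZ.
cbv -[IZR].
field_simplify.
apply Rdiv_lt_0_compat ; now apply IZR_lt.
Qed.

Definition cc : R := 2401/10000.

Lemma key : forall s, 0 <= s -> 0 <= sin s + cc * s.
Proof.
intros s Hs. unfold cc.
destruct (Rle_lt_dec s PI) as [H1|H1].
- pose proof (sin_ge_0 s Hs H1). lra.
- destruct (Rle_lt_dec s (417/100)) as [H2|H2].
  + pose proof PI_gt_31 as HP.
    set (u := s - PI).
    assert (Hsu : sin s = - sin u).
    { unfold u; rewrite sin_minus, sin_PI, cos_PI; ring. }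
    assert (Hu : 0 <= u <= 107/100) by (unfold u; lra).
    destruct (pre_sin_bound u 0) as [_ t]; [lra|lra|].
    assert (sin_approx u (2*(0+1)) = u - u^3/6 + u^5/120) as E.
    { unfold sin_approx; simpl; unfold sin_term. rewrite !INR_IZR_INZ. cbv -[IZR u pow]. field. }
    rewrite E in t. rewrite Hsu.
    assert (u^5/120 <= u^3 * (1145/120000)).
    { assert (u^2 <= 1145/1000) by nra.
      assert (0 <= u^3) by (apply pow_le; lra).
      replace (u^5) with (u^3 * u^2) by ring. nra. }
    assert (Hs' : s = u + PI) by (unfold u; ring).
    rewrite Hs'.
    assert (0 <= u^3) by (apply pow_le; lra).
    assert (u^3 <= u * (1145/1000)) by (replace (u^3) with (u*u^2) by ring; nra).
    nra.
  + pose proof (SIN_bound s). lra.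
Qed.
Definition FF (a : R) : R := 2 - 2 * cos a + cc * a^2.

Lemma FF_deriv : forall a, derivable_pt_lim FF a (2 * sin a + 2 * cc * a).
Proof.
intro a. apply is_derive_Reals. unfold FF.
auto_derive; [exact I|]. ring.
Qed.

Lemma FF_mono : forall a b, 0 <= a -> a <= b -> FF a <= FF b.
Proof.
intros a b Ha Hab. destruct (Req_dec a b) as [->|Hne]; [lra|].
destruct (MVT_cor2 FF (fun x => 2 * sin x + 2 * cc * x) a b) as [c [E Hc]].
- lra.
- intros; apply FF_deriv.
- pose proof (key c ltac:(lra)). nra.
Qed.

Lemma dist_sq : forall r t1 t2,
  inner3 (v3sub (spiral r (49/100) t1) (spiral r (49/100) t2)) (v3sub (spiral r (49/100) t1) (spiral r (49/100) t2))
  = r^2 * FF (t2 - t1).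
Proof.
intros. unfold inner3, v3sub, spiral, v3x, v3y, v3z, FF, cc; simpl.
rewrite cos_minus.
pose proof (sin2_cos2 t1). pose proof (sin2_cos2 t2). unfold Rsqr in *. nra.
Qed.

Theorem lemma4p4 :
  exists mu : R, 0 < mu < 1 / 2 /\
    forall r : R, 0 < r ->
      self_expanded (spiral r mu) /\
      (forall lam : R, 0 <= lam < 1 -> cone_property lam (spiral r mu)).
Proof.
exists (49/100). split; [lra|]. intros r Hr. split.
- intros t1 t2 t3 H12 H23. unfold norm3. apply sqrt_le_1_alt.
  rewrite !dist_sq. apply Rmult_le_compat_l; [nra|]. apply FF_mono; lra.
- intros lam Hlam.
  exists (fun t => (- r * sin t, r * cos t, 49/100 * r)). split; [|split].
  + intro t; unfold spiral, v3x, v3y, v3z; simpl; repeat split;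
      apply is_derive_Reals; auto_derive; try exact I; try ring.
  + intros t E. injection E. intros. nra.
  + intros t tau Htt.
    assert (inner3 (- r * sin tau, r * cos tau, 49 / 100 * r) (v3sub (spiral r (49 / 100) t) (spiral r (49 / 100) tau))
      = - r^2 * (sin (tau - t) + cc * (tau - t))) as ->.
    { unfold inner3, v3sub, spiral, v3x, v3y, v3z, cc; simpl. rewrite sin_minus. field. }
    pose proof (key (tau - t) ltac:(lra)).
    assert (0 <= lam * norm3 (- r * sin tau, r * cos tau, 49 / 100 * r) *
      norm3 (v3sub (spiral r (49 / 100) t) (spiral r (49 / 100) tau))).
    { unfold norm3. apply Rmult_le_pos; [apply Rmult_le_pos; [lra|apply sqrt_pos]|apply sqrt_pos]. }
    nra.
Qed.
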